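(* Let $n\ge27$, $\mathcal{X},\mathcal{Y}$ finite with $|\mathcal{X}|,|\mathcal{Y}|\ge2$, let $M$ be a discrete random variable, $\mathbf{X}$ a random vector on $\mathcal{X}^n$, and $(\mathbf{Y}_w)_{w\in\mathcal{P}(\mathcal{Y}|\mathcal{X})}$ random vectors on $\mathcal{Y}^n$ such that $M,\mathbf{X},(\mathbf{Y}_w)_w$ form a Markov chain in that order and $\mathbf{Y}_w|\mathbf{X}\sim w^n$. Let $\delta,\alpha>0$ and $\epsilon>\frac{2|\mathcal{X}||\mathcal{Y}|}{n}\log_2 n$. If for some $\tilde w\in\mathcal{P}(\mathcal{Y}|\mathcal{X})$ $$\Pr\left(|h(\mathbf{Y}_{\tilde w}|M)-\mathbb{H}(\mathbf{Y}_{\tilde w}|M)|>n\delta\right)<2^{-n\alpha},$$ then $$\Pr\left(|h(\mathbf{Y}_w|M)-\mathbb{H}(\mathbf{Y}_w|M)|>n\tilde\delta\right)<2^{-n\epsilon}+2^{-n(\alpha-\epsilon)},$$ where $$\tilde\delta=(2+2^{-n\epsilon}+2^{-n(\alpha-\epsilon)})(\delta+\epsilon)+(2^{-n\epsilon}+2^{-n(\alpha-\epsilon)})\left[\log_2|\mathcal{Y}|-\frac2n\log_2(2^{-n\epsilon}+2^{-n(\alpha-\epsilon)})\right],$$ for all $w\in\mathcal{P}(\mathcal{Y}|\mathcal{X})$ such that $$\sup_{\hat p\in\mathcal{P}(\mathcal{X}),\ \hat w\in\mathcal{P}(\mathcal{Y}|\mathcal{X})}\mathbb{D}_{\hat w}(w\|\tilde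 w|\hat p)\le\epsilon-\frac{2|\mathcal{X}||\mathcal{Y}|}{n}\log_2 n.$$
   Context: $\mathcal{P}(\mathcal{Y}|\mathcal{X})$ is the set of conditional distributions from $\mathcal{X}$ to $\mathcal{Y}$, $\mathcal{P}(\mathcal{X})$ the set of distributions on $\mathcal{X}$, $w^n(\mathbf{y}|\mathbf{x})=\prod_t w(y_t|x_t)$. $h(\mathbf{Y}_w|M)=-\log_2 p_{\mathbf{Y}_w|M}(\mathbf{Y}_w|M)$ and $\mathbb{H}$ denotes conditional entropy. $\mathbb{D}_{\hat w}(w\|\tilde w|\hat p)=\sum_{y,x}\hat w(y|x)\hat p(x)\log_2\frac{w(y|x)}{\tilde w(y|x)}$. *)

(* Defs.v *)
From HB Require Import structures.
From mathcomp Require Import all_boot all_order all_algebra.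
From mathcomp Require Import all_classical all_reals all_analysis.
Set Implicit Arguments. Unset Strict Implicit. Unset Printing Implicit Defensive.
Import Order.TTheory GRing.Theory Num.Theory.
Import numFieldNormedType.Exports.
Local Open Scope ring_scope.

(* base-2 logarithm (mathcomp-analysis [ln] returns 0 on nonpositive inputs;
   it is only ever multiplied by 0 there, giving 0 log 0 = 0) *)
Definition log2 {R : realType} (x : R) : R := ln x / ln 2.

Definition rsum {R : realType} (u : nat -> R) : R := limn (series u).

Definition is_dist {R : realType} {T : finType} (p : T -> R) : Prop :=
  (forall t, 0 <= p t) /\ \sum_(t : T) p t = 1.

(* conditional distributions / channels, P(Y|X); w x y = w(y|x) *)
Definition is_chan {R : realType} {X Y : finType} (w : X -> Y -> R) : Prop :=
  forall x, is_dist (w x).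

Definition wn {R : realType} {X Y : finType} (n : nat) (w : X -> Y -> R)
  (x : {ffun 'I_n -> X}) (y : {ffun 'I_n -> Y}) : R :=
  \prod_(t < n) w (x t) (y t).

(* Joint law of (M, X): M is discrete, its values are coded by nat;
   PMX m x = Pr(M = m, X = x). *)
Definition is_jointMX {R : realType} {X : finType} (n : nat)
  (PMX : nat -> {ffun 'I_n -> X} -> R) : Prop :=
  (forall m x, 0 <= PMX m x) /\
  (series (fun m => \sum_(x : {ffun 'I_n -> X}) PMX m x) @ \oo --> (1 : R))%classic.

Definition pM {R : realType} {X : finType} (n : nat)
  (PMX : nat -> {ffun 'I_n -> X} -> R) (m : nat) : R :=
  \sum_(x : {ffun 'I_n -> X}) PMX m x.

(* Pr(M = m, Y_w = y), for the Markov chain M - X - Y_w with Y_w|X ~ w^n *)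
Definition PMY {R : realType} {X Y : finType} (n : nat)
  (PMX : nat -> {ffun 'I_n -> X} -> R) (w : X -> Y -> R)
  (m : nat) (y : {ffun 'I_n -> Y}) : R :=
  \sum_(x : {ffun 'I_n -> X}) PMX m x * wn w x y.

Definition hinf {R : realType} {X Y : finType} (n : nat)
  (PMX : nat -> {ffun 'I_n -> X} -> R) (w : X -> Y -> R)
  (m : nat) (y : {ffun 'I_n -> Y}) : R :=
  - log2 (PMY PMX w m y / pM PMX m).

Definition Hcond {R : realType} {X Y : finType} (n : nat)
  (PMX : nat -> {ffun 'I_n -> X} -> R) (w : X -> Y -> R) : R :=
  rsum (fun m => \sum_(y : {ffun 'I_n -> Y}) PMY PMX w m y * hinf PMX w m y).

Definition Pdev {R : realType} {X Y : finType} (n : nat)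
  (PMX : nat -> {ffun 'I_n -> X} -> R) (w : X -> Y -> R) (t : R) : R :=
  rsum (fun m => \sum_(y : {ffun 'I_n -> Y})
    (if t < `| hinf PMX w m y - Hcond PMX w | then PMY PMX w m y else 0)).

(* D_{wh}(w || wt | ph) = sum_{y,x} wh(y|x) ph(x) log2 (w(y|x)/wt(y|x)),
   extended-real valued with the usual conventions: terms with zero weight
   vanish; a positive-weight term with w > 0 = wt is +oo (and then D = +oo);
   a positive-weight term with w = 0 is -oo. *)
Definition Dcond {R : realType} {X Y : finType}
  (wh : X -> Y -> R) (w wt : X -> Y -> R) (ph : X -> R) : \bar R :=
  if [exists x, exists y, (0 < wh x y * ph x) && (wt x y == 0) && (0 < w x y)]
  then +oo%E
  else (\sum_(x : X) \sum_(y : Y)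
          (if (wh x y * ph x == 0)%R then 0%E
           else if (w x y == 0)%R then -oo%E
           else ((wh x y * ph x) * log2 (w x y / wt x y))%R%:E))%E.

Definition supD_le {R : realType} {X Y : finType}
  (w wt : X -> Y -> R) (c : R) : Prop :=
  forall (ph : X -> R) (wh : X -> Y -> R), is_dist ph -> is_chan wh ->
    (Dcond wh w wt ph <= c%:E)%E.

(* Main.v *)
Require Import Defs.
From HB Require Import structures.
From mathcomp Require Import all_boot all_order all_algebra.
From mathcomp Require Import all_classical all_reals all_analysis.
From mathcomp Require Import ring lra.
Import Order.TTheory GRing.Theory Num.Theory.
Import numFieldNormedType.Exports.
Set Implicit Arguments. Unset Strict Implicit. Unset Printing Implicit Defensive.
Local Open Scope ring_scope.
Section Ser.
Variables (R : realType) (T : finType) (pm : nat -> R).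
Hypothesis pm0 : forall m, 0 <= pm m.
Hypothesis pm1 : (series pm @ \oo --> (1 : R))%classic.

Definition domf (f : nat -> T -> R) := exists C, forall m y, `|f m y| <= C * pm m.
Definition SS (f : nat -> T -> R) := rsum (fun m => \sum_y f m y).

Lemma domf_cvg f : domf f -> cvgn (series (fun m => \sum_y f m y)).
Proof.
case=> C hC; apply: normed_cvg.
have le1 : forall m, `|\sum_y f m y| <= (#|T|%:R * C) * pm m.
  move=> m; apply: (le_trans (ler_norm_sum _ _ _)).
  apply: (le_trans (ler_sum _ (fun y _ => hC m y))).
  by rewrite sumr_const mulr_natl mulrnAl.
apply: (@series_le_cvg _ _ (fun m => (#|T|%:R * C) * pm m)).
- by move=> m; rewrite /= normr_ge0.
- by move=> m; apply: le_trans (le1 m).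
- exact: le1.
- have -> : (fun m => (#|T|%:R * C) * pm m) = ((#|T|%:R * C) *: pm) by [].
  by apply: is_cvg_seriesZ; exact: (cvgP _ pm1).
Qed.

Lemma SS_le f g : domf f -> domf g -> (forall m y, f m y <= g m y) -> SS f <= SS g.
Proof.
move=> df dg le; apply: lim_series_le; try exact: domf_cvg.
by move=> m; apply: ler_sum => y _.
Qed.

Lemma SS_add f g : domf f -> domf g -> SS (fun m y => f m y + g m y) = SS f + SS g.
Proof.
move=> df dg; rewrite /SS /rsum.
have -> : (fun m => \sum_y (f m y + g m y)) =
  (fun m => \sum_y f m y) + (fun m => \sum_y g m y).
  by apply/funext => m; rewrite big_split.
by apply: lim_seriesD; apply: domf_cvg.
Qed.

Lemma SS_scale c f : domf f -> SS (fun m y => c * f m y) = c * SS f.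
Proof.
move=> df; rewrite /SS /rsum.
have -> : (fun m => \sum_y c * f m y) = c *: (fun m => \sum_y f m y).
  by apply/funext => m; rewrite -mulr_sumr.
by rewrite lim_seriesZ //; apply: domf_cvg.
Qed.

Lemma SS_pm f : (forall m, \sum_y f m y = pm m) -> SS f = 1.
Proof.
move=> h; rewrite /SS /rsum.
have -> : (fun m => \sum_y f m y) = pm by apply/funext.
exact: cvg_lim.
Qed.

Lemma domfP f C : (forall m y, `|f m y| <= C * pm m) -> domf f.
Proof. by move=> h; exists C. Qed.

Lemma domf_add f g : domf f -> domf g -> domf (fun m y => f m y + g m y).
Proof.
case=> C hC [D hD]; exists (C + D) => m y.
by rewrite mulrDl (le_trans (ler_normD _ _)) // lerD.
Qed.

Lemma domf_scale c f : domf f -> domf (fun m y => c * f m y).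
Proof.
case=> C hC; exists (`|c| * C) => m y.
by rewrite normrM -mulrA ler_wpM2l.
Qed.

Lemma domf_le f g : domf g -> (forall m y, `|f m y| <= `|g m y|) -> domf f.
Proof. case=> C hC h; exists C => m y; exact: le_trans (h m y) (hC m y). Qed.

End Ser.
Section RealFacts.
Variable R : realType.

Lemma ln2_gt0 : 0 < ln (2 : R).
Proof. by apply: ln_gt0; rewrite ltr1n. Qed.

Lemma ln_le_sub1 (x : R) : 0 < x -> ln x <= x - 1.
Proof.
move=> x0; have := @le_ln1Dx R (x - 1).
have -> : 1 + (x - 1) = x by ring.
apply; rewrite ltrBrDl; lra.
Qed.

Lemma gibbs (P pm lam N : R) : 0 <= P -> P <= pm -> 0 < lam -> 0 < N ->
  P * (- log2 (P / pm)) <= P * (log2 N - log2 lam) + (lam * pm / N - P) / ln 2.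
Proof.
move=> P0 Ppm l0 N0; have l2 := @ln2_gt0.
have [->|Pp] := eqVneq P 0.
  rewrite !mul0r subr0 add0r; apply: divr_ge0; last exact: ltW.
  by apply: divr_ge0 (ltW N0); apply: mulr_ge0 (ltW l0) (le_trans P0 Ppm).
have Pg : 0 < P by rewrite lt_def Pp P0.
have pmg : 0 < pm by apply: lt_le_trans Ppm.
set r := lam * pm / N.
have rg : 0 < r by rewrite /r divr_gt0 // mulr_gt0.
have key1 : P * (ln r - ln P) <= r - P.
  rewrite -ln_div ?posrE //.
  have h := @ln_le_sub1 (r / P) (divr_gt0 rg Pg).
  have -> : r - P = P * (r / P - 1) by field; rewrite gt_eqF.
  by rewrite ler_wpM2l // ltW.
have lr : ln r = ln lam + ln pm - ln N.
  by rewrite /r ln_div ?posrE ?mulr_gt0 // lnM ?posrE.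
have E : P * (log2 N - log2 lam) + (lam * pm / N - P) / ln 2 - P * (- log2 (P / pm))
   = ((r - P) - P * (ln r - ln P)) / ln 2.
  by rewrite /log2 ln_div ?posrE // lr -/r; field; rewrite gt_eqF.
have H0 : 0 <= ((r - P) - P * (ln r - ln P)) / ln 2.
  by apply: divr_ge0; [rewrite subr_ge0 | exact: ltW].
by rewrite -E subr_ge0 in H0.
Qed.

End RealFacts.
Section Letter.
Variables (R : realType) (X Y : finType).

Lemma log2_le_pow (q c : R) : 0 < q -> log2 q <= c -> q <= 2 `^ c.
Proof.
move=> q0 h; have l2 := @ln2_gt0 R.
have h2 : ln q <= c * ln 2.
  by move: h; rewrite /log2 ler_pdivrMr.
rewrite /powR.
have -> : ((2:R) == 0) = false by rewrite pnatr_eq0.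
by rewrite -ler_ln ?posrE ?expR_gt0 // expRK.
Qed.

Lemma letter_bound (w wt : X -> Y -> R) (c : R) : is_chan w -> is_chan wt ->
  supD_le w wt c -> forall x0 y0, w x0 y0 <= 2 `^ c * wt x0 y0.
Proof.
move=> hw hwt hD x0 y0.
have [w0|wn0] := eqVneq (w x0 y0) 0.
  by rewrite w0; apply: mulr_ge0; [exact: powR_ge0 | case: (hwt x0) => h _; exact: h].
have wg : 0 < w x0 y0 by rewrite lt_def wn0 /=; case: (hw x0) => h _; exact: h.
pose ph := fun x : X => ((x == x0)%:R : R).
pose wh := fun (x : X) (y : Y) => ((y == y0)%:R : R).
have dph : is_dist ph.
  split; first by move=> t; rewrite /ph ler0n.
  rewrite (bigD1 x0) //= /ph eqxx big1 ?addr0 // => x /negbTE -> //.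
have cwh : is_chan wh.
  move=> x; split; first by move=> t; rewrite /wh ler0n.
  rewrite (bigD1 y0) //= /wh eqxx big1 ?addr0 // => y /negbTE -> //.
have := hD ph wh dph cwh; rewrite /Dcond.
case: ifP => [_|hex]; first by rewrite leNgt ltey.
rewrite (bigD1 x0) //= [X in (_ + X)%E]big1 ?adde0; last first.
  move=> x /negbTE hx; apply: big1 => y _; by rewrite /ph hx mulr0 eqxx.
rewrite (bigD1 y0) //= [X in (_ + X)%E]big1 ?adde0; last first.
  move=> y /negbTE hy; by rewrite /wh hy mul0r eqxx.
rewrite /wh /ph !eqxx mulr1 oner_eq0 (negbTE wn0) mul1r lee_fin => hl.
have [wt0|wtn0] := eqVneq (wt x0 y0) 0.
  move/negbT: hex; case/negP; apply/existsP; exists x0; apply/existsP; exists y0.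
  by rewrite /wh /ph !eqxx mulr1 ltr01 wt0 eqxx wg.
have wtg : 0 < wt x0 y0 by rewrite lt_def wtn0 /=; case: (hwt x0) => h _; exact: h.
by rewrite -ler_pdivrMr // log2_le_pow // divr_gt0.
Qed.
End Letter.
Section Info.
Variables (R : realType) (X Y : finType) (n : nat).

Lemma wn_ge0 (w : X -> Y -> R) (x : {ffun 'I_n -> X}) (y : {ffun 'I_n -> Y}) : is_chan w -> 0 <= wn w x y.
Proof. by move=> hw; apply: prodr_ge0 => t _; case: (hw (x t)). Qed.

Lemma sum_wn (w : X -> Y -> R) (x : {ffun 'I_n -> X}) : is_chan w ->
  \sum_(y : {ffun 'I_n -> Y}) wn w x y = 1.
Proof.
move=> hw; rewrite /wn.
rewrite -(bigA_distr_bigA (fun t j => w (x t) j)) /=.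
by apply: big1 => t _; case: (hw (x t)).
Qed.

Lemma le_sum1 (T : finType) (F : T -> R) t : (forall t, 0 <= F t) -> F t <= \sum_t F t.
Proof.
move=> h; rewrite (bigD1 t) //= lerDl; exact: sumr_ge0.
Qed.

Variable PMX : nat -> {ffun 'I_n -> X} -> R.
Hypothesis hPMX : is_jointMX PMX.

Lemma pM_ge0 m : 0 <= pM PMX m.
Proof. by apply: sumr_ge0 => x _; case: hPMX. Qed.

Lemma PMY_ge0 (w : X -> Y -> R) m y : is_chan w -> 0 <= PMY PMX w m y.
Proof. move=> hw; apply: sumr_ge0 => x _; apply: mulr_ge0; [by case: hPMX | exact: wn_ge0]. Qed.

Lemma sum_PMY (w : X -> Y -> R) m : is_chan w -> \sum_y PMY PMX w m y = pM PMX m.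
Proof.
move=> hw; rewrite /PMY exchange_big /=; apply: eq_bigr => x _.
by rewrite -mulr_sumr sum_wn // mulr1.
Qed.

Lemma PMY_le (w : X -> Y -> R) m y : is_chan w -> PMY PMX w m y <= pM PMX m.
Proof. by move=> hw; rewrite -(sum_PMY m hw); apply: le_sum1 => z; apply: PMY_ge0. Qed.

End Info.
Section Main.
Variables (R : realType) (X Y : finType) (n : nat).
Variable PMX : nat -> {ffun 'I_n -> X} -> R.
Hypothesis hPMX : is_jointMX PMX.
Variables (w wt : X -> Y -> R).
Hypothesis hY : (0 < #|Y|)%N.
Hypotheses (hw : is_chan w) (hwt : is_chan wt).
Variables (delta eps eps' a : R).
Hypothesis eps'_le : eps' <= eps.
Hypothesis hK : forall x y, w x y <= 2 `^ eps' * wt x y.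

Notation nr := (n%:R : R).
Notation pm := (pM PMX).
Notation P := (PMY PMX w).
Notation Q := (PMY PMX wt).
Notation hw_ := (hinf PMX w).
Notation ht_ := (hinf PMX wt).
Notation Hw := (Hcond PMX w).
Notation Ht := (Hcond PMX wt).
Notation l2 := (ln (2 : R)).
Notation NN := (#|{ffun 'I_n -> Y}|%:R : R).
Notation LN := (log2 NN).
Notation D := (nr * (delta + eps)).

Definition bad m y := (nr * delta < `|ht_ m y - Ht|) || (P m y < 2 `^ (- (nr * eps)) * Q m y).

Lemma pm1 : (series pm @ \oo --> (1 : R))%classic.
Proof. by case: hPMX. Qed.

Lemma P_le_KQ m y : P m y <= 2 `^ (nr * eps') * Q m y.
Proof.
rewrite /PMY mulr_sumr; apply: ler_sum => x _.
rewrite mulrCA; apply: ler_wpM2l; first by case: hPMX.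
rewrite /wn.
have -> : 2 `^ (nr * eps') = \prod_(t < n) (2 `^ eps' : R).
  by rewrite prodr_const card_ord -powR_mulrn ?powR_ge0 // -powRrM mulrC.
rewrite -big_split /=; apply: ler_prod => t _.
by rewrite hK andbT; case: (hw (x t)).
Qed.

Lemma NN_gt0 : 0 < NN.
Proof. by rewrite ltr0n card_ffun card_ord expn_gt0 hY. Qed.

Lemma h_ge0 (v : X -> Y -> R) m y : is_chan v -> 0 <= hinf PMX v m y.
Proof.
move=> hv; rewrite /hinf /log2 oppr_ge0; apply: mulr_le0_ge0; last first.
  by rewrite invr_ge0 ltW // ln2_gt0.
apply: ln_le0.
have [->|pn] := eqVneq (pm m) 0; first by rewrite invr0 mulr0 ler01.
have pg : 0 < pm m by rewrite lt_def pn (pM_ge0 hPMX).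
by rewrite ler_pdivrMr // mul1r (PMY_le hPMX).
Qed.

Lemma domf_P (v : X -> Y -> R) : is_chan v -> domf pm (PMY PMX v).
Proof.
move=> hv; exists 1 => m y; rewrite mul1r ger0_norm ?(PMY_ge0 hPMX) //; exact: (PMY_le hPMX).
Qed.

Lemma Ph_le (v : X -> Y -> R) m y : is_chan v ->
  PMY PMX v m y * hinf PMX v m y <= PMY PMX v m y * LN + (pm m / NN - PMY PMX v m y) / l2.
Proof.
move=> hv; have := @gibbs R (PMY PMX v m y) (pm m) 1 NN (PMY_ge0 hPMX m y hv) (PMY_le hPMX m y hv) ltr01 NN_gt0.
by rewrite /log2 ln1 mul0r subr0 mul1r.
Qed.

Lemma LN_ge0 : 0 <= LN.
Proof.
rewrite /log2 divr_ge0 ?ln_ge0 ?(ltW ln2_gt0) ?ler1n //.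
by rewrite card_ffun card_ord expn_gt0 hY.
Qed.

Lemma domf_Ph (v : X -> Y -> R) : is_chan v -> domf pm (fun m y => PMY PMX v m y * hinf PMX v m y).
Proof.
move=> hv; exists (LN + l2^-1) => m y.
rewrite ger0_norm ?mulr_ge0 ?h_ge0 ?(PMY_ge0 hPMX) //.
apply: (le_trans (Ph_le m y hv)).
have l2g := @ln2_gt0 R.
have h1 := PMY_le hPMX m y hv; have h0 := PMY_ge0 hPMX m y hv.
have p0 := pM_ge0 hPMX m.
rewrite [X in _ <= X]mulrDl; apply: lerD; first by rewrite mulrC ler_wpM2l // LN_ge0.
rewrite [X in _ <= X]mulrC; apply: ler_wpM2r; first by rewrite invr_ge0 ltW.
have : pm m / NN <= pm m.
  rewrite ler_pdivrMr ?NN_gt0 // ler_peMr // ler1n.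
  by rewrite card_ffun card_ord expn_gt0 hY.
lra.
Qed.

Lemma SS_c (f : nat -> {ffun 'I_n -> Y} -> R) c : (forall m, \sum_y f m y = c * pm m) -> SS f = c.
Proof.
move=> h; rewrite /SS /rsum.
have -> : (fun m => \sum_y f m y) = c *: pm by apply/funext => m; rewrite h.
rewrite lim_seriesZ; last exact: (cvgP _ pm1).
by rewrite (cvg_lim _ pm1) // /GRing.scale /= mulr1.
Qed.

Lemma SS_P (v : X -> Y -> R) : is_chan v -> SS (PMY PMX v) = 1.
Proof. by move=> hv; apply: SS_c => m; rewrite mul1r sum_PMY. Qed.

Lemma H_ge0 (v : X -> Y -> R) : is_chan v -> 0 <= Hcond PMX v.
Proof.
move=> hv; have -> : (0 : R) = SS (fun m y => 0 * PMY PMX v m y).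
  by rewrite (SS_scale pm1) ?mul0r //; exact: domf_P.
apply: (SS_le pm1); first by apply: domf_scale; exact: domf_P.
  exact: domf_Ph.
by move=> m y; rewrite mul0r mulr_ge0 ?h_ge0 ?(PMY_ge0 hPMX).
Qed.

Lemma Ht_le : Ht <= LN.
Proof.
have -> : LN = SS (fun m y => PMY PMX wt m y * LN + (pm m / NN - PMY PMX wt m y) / l2).
  apply/esym/SS_c => m.
  rewrite big_split /= -mulr_suml sum_PMY // -mulr_suml sumrB sumr_const sum_PMY //.
  have -> : #|@predT {ffun 'I_n -> Y}| = #|{ffun 'I_n -> Y}| by [].
  rewrite -(mulr_natr (pm m / NN)) -mulrA mulVf ?mulr1 ?subrr ?mul0r ?addr0 1?mulrC //.
  by rewrite gt_eqF // NN_gt0.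
apply: (SS_le pm1); first exact: domf_Ph.
  apply: domf_add.
    exists LN => m y; rewrite normrM (ger0_norm LN_ge0) ger0_norm ?(PMY_ge0 hPMX) //.
    by rewrite mulrC ler_wpM2l ?LN_ge0 // (PMY_le hPMX).
  exists (2 / l2) => m y.
  have l2g := @ln2_gt0 R.
  have il : 0 <= l2^-1 by rewrite invr_ge0 ltW.
  rewrite normrM (ger0_norm il) mulrAC.
  apply: ler_wpM2r; first by rewrite invr_ge0 ltW.
  have h1 := PMY_le hPMX m y hwt; have h0 := PMY_ge0 hPMX m y hwt.
  have p0 := pM_ge0 hPMX m.
  have : pm m / NN <= pm m.
    rewrite ler_pdivrMr ?NN_gt0 // ler_peMr // ler1n.
    by rewrite card_ffun card_ord expn_gt0 hY.
  have : 0 <= pm m / NN by rewrite divr_ge0 // ltW // NN_gt0.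
  rewrite ler_norml; move=> *; apply/andP; split; lra.
by move=> m y; apply: Ph_le.
Qed.
Hypothesis n0 : (0 < n)%N.

Lemma hdiff m y : 0 < P m y -> ~~ bad m y -> `|hw_ m y - Ht| <= D.
Proof.
move=> Pg; rewrite /bad negb_or -!leNgt => /andP[hB hU].
have l2g := @ln2_gt0 R.
have Qg : 0 < Q m y.
  have := lt_le_trans Pg (P_le_KQ m y); rewrite pmulr_rgt0 // powR_gt0 //.
have pmg : 0 < pm m by apply: lt_le_trans Pg (PMY_le hPMX m y hw).
have up : ln (P m y) <= nr * eps' * l2 + ln (Q m y).
  by rewrite -ln_powR -lnM ?posrE ?powR_gt0 // ler_ln ?posrE ?mulr_gt0 ?powR_gt0 // P_le_KQ.
have lo : - (nr * eps) * l2 + ln (Q m y) <= ln (P m y).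
  by rewrite -ln_powR -lnM ?posrE ?powR_gt0 // ler_ln ?posrE ?mulr_gt0 ?powR_gt0.
have E : hw_ m y - ht_ m y = (ln (Q m y) - ln (P m y)) / l2.
  by rewrite /hinf /log2 !ln_div ?posrE //; ring.
have tt : nr * eps' * l2 <= nr * eps * l2.
  by rewrite ler_wpM2r ?(ltW l2g) // ler_wpM2l ?ler0n.
have d1 : `|hw_ m y - ht_ m y| <= nr * eps.
  have il : 0 <= l2^-1 by rewrite invr_ge0 ltW.
  rewrite E normrM (ger0_norm il) ler_pdivrMr // ler_norml.
  apply/andP; split; lra.
have -> : hw_ m y - Ht = (hw_ m y - ht_ m y) + (ht_ m y - Ht) by ring.
apply: (le_trans (ler_normD _ _)).
rewrite mulrDr addrC; exact: lerD.
Qed.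
Variable alpha : R.
Hypothesis a_def : a = 2 `^ (- (nr * eps)) + 2 `^ (- (nr * (alpha - eps))).
Hypothesis D0 : 0 <= delta + eps.
Hypothesis hdev : Pdev PMX wt (nr * delta) < 2 `^ (- (nr * alpha)).

Definition Ib m y := if bad m y then P m y else 0.

Lemma a_gt0 : 0 < a.
Proof. by rewrite a_def addr_gt0 // powR_gt0. Qed.

Lemma Ib_ge0 m y : 0 <= Ib m y.
Proof. by rewrite /Ib; case: ifP => // _; exact: (PMY_ge0 hPMX). Qed.

Lemma Ib_le m y : Ib m y <= P m y.
Proof. by rewrite /Ib; case: ifP => // _; exact: (PMY_ge0 hPMX). Qed.

Lemma domf_Ib : domf pm Ib.
Proof.
apply: (@domf_le _ _ _ Ib (PMY PMX w) (domf_P hw)) => m y.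
by rewrite !ger0_norm ?Ib_ge0 ?(PMY_ge0 hPMX) // Ib_le.
Qed.

Lemma D_ge0 : 0 <= D.
Proof. by rewrite mulr_ge0 ?ler0n. Qed.

Lemma T1 m y : P m y * hw_ m y <=
  ((Ht + D) * P m y + (a / NN / l2) * pm m) + (LN - log2 a) * Ib m y.
Proof.
have l2g := @ln2_gt0 R.
have c0 : 0 <= (a / NN / l2) * pm m.
  by rewrite !mulr_ge0 ?invr_ge0 ?(ltW l2g) ?(ltW NN_gt0) ?(ltW a_gt0) ?(pM_ge0 hPMX).
have [P0|Pn] := eqVneq (P m y) 0.
  by rewrite /Ib P0 if_same !mul0r !mulr0 add0r addr0.
have Pg : 0 < P m y by rewrite lt_def Pn (PMY_ge0 hPMX).
have HD : 0 <= Ht + D by rewrite addr_ge0 ?D_ge0 ?H_ge0.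
rewrite /Ib; case: ifP => hb.
  have g := @gibbs R (P m y) (pm m) a NN (PMY_ge0 hPMX m y hw) (PMY_le hPMX m y hw) a_gt0 NN_gt0.
  rewrite /hinf; apply: (le_trans g).
  have e : (a * pm m / NN - P m y) / l2 = (a / NN / l2) * pm m - P m y / l2 by ring.
  rewrite e.
  have : 0 <= P m y / l2 by rewrite divr_ge0 ?(ltW Pg) ?(ltW l2g).
  have : 0 <= (Ht + D) * P m y by rewrite mulr_ge0 ?(ltW Pg).
  lra.
have := hdiff Pg (negbT hb); rewrite ler_norml => /andP[_ h].
rewrite mulr0 addr0 (mulrC (Ht + D)).
have : P m y * hw_ m y <= P m y * (Ht + D).
  by rewrite ler_wpM2l ?(ltW Pg) //; lra.
lra.
Qed.

Lemma T2 m y : Ht * P m y <= (P m y * hw_ m y + D * P m y) + LN * Ib m y.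
Proof.
have [P0|Pn] := eqVneq (P m y) 0.
  by rewrite /Ib P0 if_same !mul0r !mulr0 add0r addr0.
have Pg : 0 < P m y by rewrite lt_def Pn (PMY_ge0 hPMX).
have h0 := h_ge0 m y hw.
rewrite /Ib; case: ifP => hb.
  have : Ht * P m y <= LN * P m y by rewrite ler_wpM2r ?(ltW Pg) ?Ht_le.
  have : 0 <= P m y * hw_ m y by rewrite mulr_ge0 ?(ltW Pg).
  have : 0 <= D * P m y by rewrite mulr_ge0 ?(ltW Pg) ?D_ge0.
  lra.
have := hdiff Pg (negbT hb); rewrite ler_norml => /andP[h _].
rewrite mulr0 addr0 (mulrC (P m y)) -mulrDl ler_wpM2r ?(ltW Pg) //; lra.
Qed.
Lemma p_ge0 : 0 <= SS Ib.
Proof.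
have -> : (0 : R) = SS (fun m y => 0 * Ib m y).
  by rewrite (SS_scale pm1) ?mul0r //; exact: domf_Ib.
apply: (SS_le pm1); first by apply: domf_scale; exact: domf_Ib.
  exact: domf_Ib.
by move=> m y; rewrite mul0r Ib_ge0.
Qed.

Definition IB m y := if nr * delta < `|ht_ m y - Ht| then Q m y else 0.

Lemma domf_IB : domf pm IB.
Proof.
apply: (@domf_le _ _ _ IB (PMY PMX wt) (domf_P hwt)) => m y.
rewrite /IB; case: ifP => _ //; by rewrite normr0.
Qed.

Lemma pow2D r s : 2 `^ (r + s) = 2 `^ r * 2 `^ s :> R.
Proof. by rewrite powRD // pnatr_eq0 implybT. Qed.

Lemma p_lt : SS Ib < a.
Proof.
have Kg : 0 < 2 `^ (nr * eps') :> R by rewrite powR_gt0.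
have sg : 0 < 2 `^ (- (nr * eps)) :> R by rewrite powR_gt0.
have le1 : SS Ib <= SS (fun m y => 2 `^ (- (nr * eps)) * Q m y + 2 `^ (nr * eps') * IB m y).
  apply: (SS_le pm1); first exact: domf_Ib.
    by apply: domf_add; apply: domf_scale; [exact: domf_P | exact: domf_IB].
  move=> m y; rewrite /Ib /IB /bad.
  have q0 := PMY_ge0 hPMX m y hwt; have p0 := PMY_ge0 hPMX m y hw.
  case hA : (nr * delta < `|ht_ m y - Ht|) => /=.
    have := P_le_KQ m y.
    have : 0 <= 2 `^ (- (nr * eps)) * Q m y by rewrite mulr_ge0 // ltW.
    lra.
  rewrite mulr0 addr0; case: ifP => hU; first exact: ltW.
  by rewrite mulr_ge0 // ltW.
have dQ := domf_P hwt; have dIB := domf_IB.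
rewrite (SS_add pm1 (domf_scale _ dQ) (domf_scale _ dIB)) (SS_scale pm1 _ dQ) (SS_scale pm1 _ dIB) in le1.
rewrite SS_P // mulr1 in le1.
have e : SS IB = Pdev PMX wt (nr * delta) by [].
rewrite e in le1.
apply: (le_lt_trans le1).
rewrite a_def ltrD2l.
have h1 : 2 `^ (nr * eps') * Pdev PMX wt (nr * delta) < 2 `^ (nr * eps') * 2 `^ (- (nr * alpha)).
  by rewrite ltr_pM2l.
apply: (lt_le_trans h1); rewrite -pow2D; apply: ler_powR; first by rewrite ler1n.
have : nr * eps' <= nr * eps by rewrite ler_wpM2l ?ler0n.
lra.
Qed.
Lemma Hw_up : Hw <= Ht + D + a / l2 + (LN - log2 a) * SS Ib.
Proof.
have l2g := @ln2_gt0 R.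
have dP := domf_P hw; have dIb := domf_Ib.
have dc : domf pm (fun m (y : {ffun 'I_n -> Y}) => (a / NN / l2) * pm m).
  by exists `|a / NN / l2| => m y; rewrite normrM (ger0_norm (pM_ge0 hPMX m)).
have dg1 := domf_add (domf_scale (Ht + D) dP) dc.
have le1 : Hw <= SS (fun m y => ((Ht + D) * P m y + (a / NN / l2) * pm m) + (LN - log2 a) * Ib m y).
  apply: (SS_le pm1); first exact: domf_Ph.
    by apply: domf_add => //; apply: domf_scale.
  exact: T1.
rewrite (SS_add pm1 dg1 (domf_scale _ dIb)) (SS_scale pm1 _ dIb) in le1.
have e : SS (fun m y => (Ht + D) * P m y + (a / NN / l2) * pm m) = Ht + D + a / l2.
  apply: SS_c => m.
  rewrite big_split /= -mulr_sumr sum_PMY // sumr_const.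
  have -> : #|@predT {ffun 'I_n -> Y}| = #|{ffun 'I_n -> Y}| by [].
  rewrite -mulr_natr; field.
  by rewrite !gt_eqF ?NN_gt0.
by rewrite e in le1.
Qed.

Lemma Ht_up : Ht <= Hw + D + LN * SS Ib.
Proof.
have dP := domf_P hw; have dIb := domf_Ib.
have dPh := domf_Ph hw.
have e : Ht = SS (fun m y => Ht * P m y) by rewrite (SS_scale pm1 _ dP) SS_P // mulr1.
rewrite [X in X <= _]e.
have le1 : SS (fun m y => Ht * P m y) <= SS (fun m y => (P m y * hw_ m y + D * P m y) + LN * Ib m y).
  apply: (SS_le pm1); first exact: domf_scale.
    by apply: domf_add; [apply: domf_add => //; apply: domf_scale | apply: domf_scale].
  exact: T2.
rewrite (SS_add pm1 (domf_add dPh (domf_scale _ dP)) (domf_scale _ dIb)) in le1.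
rewrite (SS_add pm1 dPh (domf_scale _ dP)) !(SS_scale pm1) // SS_P // mulr1 in le1.
by rewrite mulr1 in le1; rewrite -e.
Qed.
Lemma final_sec (T : R) : a <= 1 -> l2^-1 <= D ->
  D + ((1 + a) * D + a * LN - 2 * a * log2 a) <= T -> Pdev PMX w T < a.
Proof.
move=> a1 Dl hT.
have l2g := @ln2_gt0 R.
have ag := a_gt0.
have la : log2 a <= 0.
  by rewrite /log2 mulr_le0_ge0 ?ln_le0 // invr_ge0 ltW.
have pl := p_lt; have p0 := p_ge0.
have up := Hw_up; have lo := Ht_up.
have LN0 := LN_ge0.
have al : a / l2 <= a * D by rewrite ler_wpM2l // ltW.
have t1 : (LN - log2 a) * SS Ib <= (LN - log2 a) * a.
  by apply: ler_wpM2l; [lra | exact: ltW].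
have t2 : LN * SS Ib <= LN * a by apply: ler_wpM2l => //; exact: ltW.
have t3 : a * log2 a <= 0 by rewrite mulr_ge0_le0 // ltW.
have t4 : 0 <= a * D by rewrite mulr_ge0 ?D_ge0 // ltW.
have HH : `|Ht - Hw| <= (1 + a) * D + a * LN - 2 * a * log2 a.
  rewrite ler_norml; apply/andP; split; lra.
have -> : Pdev PMX w T = SS (fun m y => if T < `|hw_ m y - Hw| then P m y else 0) by [].
apply: le_lt_trans pl.
apply: (SS_le pm1).
- apply: (@domf_le _ _ _ _ (PMY PMX w) (domf_P hw)) => m y.
  by case: ifP => _ //; rewrite normr0.
- exact: domf_Ib.
move=> m y; rewrite /Ib.
have p0' := PMY_ge0 hPMX m y hw.
case hb: (bad m y); first by case: ifP.
have [P0|Pn] := eqVneq (P m y) 0; first by rewrite P0 if_same.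
have Pg : 0 < P m y by rewrite lt_def Pn p0'.
have hd := hdiff Pg (negbT hb).
have : `|hw_ m y - Hw| <= T.
  have -> : hw_ m y - Hw = (hw_ m y - Ht) + (Ht - Hw) by ring.
  apply: (le_trans (ler_normD _ _)); lra.
by rewrite leNgt => /negbTE ->.
Qed.

Lemma Pdev_le1 T : Pdev PMX w T <= 1.
Proof.
have -> : Pdev PMX w T = SS (fun m y => if T < `|hw_ m y - Hw| then P m y else 0) by [].
rewrite -(SS_P hw); apply: (SS_le pm1).
- apply: (@domf_le _ _ _ _ (PMY PMX w) (domf_P hw)) => m y.
  by case: ifP => _ //; rewrite normr0.
- exact: domf_P.
move=> m y; have := PMY_ge0 hPMX m y hw; by case: ifP.
Qed.
End Main.

Unset Implicit Arguments.

Theorem lemma32 (R : realType) (X Y : finType) (n : nat)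
  (PMX : nat -> {ffun 'I_n -> X} -> R) (delta alpha eps : R) :
  (27 <= n)%N -> (2 <= #|X|)%N -> (2 <= #|Y|)%N ->
  is_jointMX PMX ->
  0 < delta -> 0 < alpha ->
  2 * #|X|%:R * #|Y|%:R / n%:R * log2 (n%:R : R) < eps ->
  forall wt : X -> Y -> R, is_chan wt ->
  Pdev PMX wt (n%:R * delta) < 2 `^ (- (n%:R * alpha)) ->
  forall w : X -> Y -> R, is_chan w ->
  supD_le w wt (eps - 2 * #|X|%:R * #|Y|%:R / n%:R * log2 (n%:R : R)) ->
  let a := 2 `^ (- (n%:R * eps)) + 2 `^ (- (n%:R * (alpha - eps))) in
  let deltat := (2 + a) * (delta + eps)
                + a * (log2 (#|Y|%:R : R) - 2 / n%:R * log2 a) in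
  Pdev PMX w (n%:R * deltat) < a.
Proof.
move=> n27 hX hY2 hPMX d0 al0 heps wt hwt hdev w hw hsup.
cbv zeta.
set a := 2 `^ (- (n%:R * eps)) + 2 `^ (- (n%:R * (alpha - eps))).
set deltat := (2 + a) * (delta + eps) + a * (log2 (#|Y|%:R : R) - 2 / n%:R * log2 a).
set c := 2 * #|X|%:R * #|Y|%:R / n%:R * log2 (n%:R : R) in heps hsup.
have hK := letter_bound hw hwt hsup.
have l2g := @ln2_gt0 R.
have ng : (0 : R) < n%:R by rewrite ltr0n; apply: leq_trans n27.
have lnn : 1 / 2 <= ln (n%:R : R).
  have ing : 0 < (n%:R : R)^-1 by rewrite invr_gt0.
  have h := ln_le_sub1 ing.
  rewrite lnV ?posrE // in h.
  have : (n%:R : R)^-1 <= 1 / 2.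
    have h2 : (2:R) <= n%:R by rewrite ler_nat; apply: leq_trans n27.
    rewrite -div1r ler_pdivrMr //; lra.
  lra.
have u0 : 1 / 2 / ln 2 <= log2 (n%:R : R).
  by rewrite /log2 ler_pM2r // invr_gt0.
have XY : 4 <= #|X|%:R * #|Y|%:R :> R.
  have hx : 2 <= #|X|%:R :> R by rewrite ler_nat.
  have hy : 2 <= #|Y|%:R :> R by rewrite ler_nat.
  have -> : (4 : R) = 2 * 2 by rewrite -natrM.
  by apply: ler_pM.
have nc : n%:R * c = 2 * (#|X|%:R * #|Y|%:R) * log2 (n%:R : R).
  by rewrite /c; field; rewrite gt_eqF.
have c0 : 0 <= c.
  have : 0 <= n%:R * c.
    rewrite nc; apply: mulr_ge0; first by apply: mulr_ge0 => //; lra.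
    apply: le_trans u0; by rewrite divr_ge0 // ltW.
  by rewrite pmulr_rge0.
have Dl : (ln (2 : R))^-1 <= n%:R * (delta + eps).
  have h1 : n%:R * c <= n%:R * (delta + eps).
    by rewrite ler_pM2l //; lra.
  apply: le_trans h1; rewrite nc.
  have h2 : 4 * (1 / 2 / ln 2) <= (#|X|%:R * #|Y|%:R) * log2 (n%:R : R).
    by apply: ler_pM => //; rewrite divr_ge0 // ltW.
  have e4 : 4 * (1 / 2 / ln (2 : R)) = 2 * (ln 2)^-1 by field; rewrite gt_eqF.
  have : 0 <= (ln (2 : R))^-1 by rewrite invr_ge0 ltW.
  lra.
have hY : (0 < #|Y|)%N by apply: leq_trans hY2.
have [a1|a1] := leP a 1; last first.
  by apply: le_lt_trans a1; apply: Pdev_le1.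
apply: (@final_sec R X Y n PMX hPMX w wt hY hw hwt delta eps (eps - c) a _ hK alpha) => //.
- lra.
- lra.
have LNe : log2 (#|{ffun 'I_n -> Y}|%:R : R) = n%:R * log2 (#|Y|%:R : R).
  rewrite card_ffun card_ord natrX /log2 lnXn ?ltr0n // -mulr_natl; ring.
rewrite LNe /deltat le_eqVlt; apply/orP; left; apply/eqP.
by field; rewrite gt_eqF.
Qed.
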